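(* Let $D$ be a strongly connected digraph with $\chi(D)\geq 4$. Then $D$ contains a subdivision of $B(2,1;1)$.
   Context: Digraphs are finite, without loops or parallel arcs (opposite arcs allowed). $\chi(D)$ is the chromatic number of the underlying undirected graph of $D$. A digraph is strongly connected if every vertex can reach every other vertex by a directed path. For positive integers $k_1,k_2,k_3$, a digraph $D$ contains a subdivision of $B(k_1,k_2;k_3)$ if there exist distinct vertices $x,y$ of $D$ and three pairwise internally vertex-disjoint directed paths in $D$: two from $x$ to $y$, of lengths (numbers of arcs) at least $k_1$ and at least $k_2$ respectively, and one from $y$ to $x$ of length at least $k_3$. *)

(* Defs.v *)
From mathcomp Require Import all_boot.
Set Implicit Arguments. Unset Strict Implicit. Unset Printing Implicit Defensive.

(* A digraph on a finite vertex type V is an arc relation [a : rel V];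
   [a x y] means there is an arc x -> y. Parallel arcs are excluded by
   construction; loops are excluded by the hypothesis [irreflexive a];
   opposite arcs are allowed. *)

Definition und_adj (V : finType) (a : rel V) : rel V :=
  fun x y => a x y || a y x.

Definition proper_coloring (V : finType) (a : rel V) (k : nat) (f : V -> 'I_k) :=
  forall x y, und_adj a x y -> f x != f y.

Definition colorable (V : finType) (a : rel V) (k : nat) :=
  exists f : V -> 'I_k, proper_coloring a f.

Lemma colorable_card (V : finType) (a : rel V) :
  irreflexive a -> colorable a #|V|.
Proof.
move=> irr; exists (@enum_rank V) => x y /orP Hxy.
apply/negP => /eqP /enum_rank_inj exy; subst y.
by case: Hxy; rewrite irr.
Qed.

Definition colorableb (V : finType) (a : rel V) (k : nat) : bool :=
  [exists f : {ffun V -> 'I_k}, [forall x, forall y, und_adj a x y ==> (f x != f y)]].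

Lemma colorableP (V : finType) (a : rel V) k : reflect (colorable a k) (colorableb a k).
Proof.
apply: (iffP existsP) => [[f /forallP Hf]|[f Hf]].
  exists f => x y Hxy; move: (Hf x) => /forallP /(_ y); by rewrite Hxy.
exists (finfun f); apply/forallP => x; apply/forallP => y; rewrite !ffunE.
by apply/implyP => /Hf.
Qed.

Definition chi (V : finType) (a : rel V) (irr : irreflexive a) : nat :=
  ex_minn (ex_intro (fun k => colorableb a k) #|V|
             (introT (colorableP a #|V|) (colorable_card irr))).

Definition strongly_connected (V : finType) (a : rel V) :=
  forall x y : V, connect a x y.

(* A directed path from x to y: the vertex sequence x :: p, pairwise
   distinct, consecutive vertices joined by arcs, ending at y (so p lists the
   vertices after x, the last one being y). Its length (number of arcs) is
   [size p]. *)
Definition dpath (V : finType) (a : rel V) (x y : V) (p : seq V) :=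
  [/\ path a x p, uniq (x :: p) & last x p = y].

Definition internal (V : finType) (p : seq V) : seq V := take (size p).-1 p.

Definition has_B_subdivision (V : finType) (a : rel V) (k1 k2 k3 : nat) :=
  exists x y : V, exists p1 p2 p3 : seq V,
    [/\ x != y,
        [/\ dpath a x y p1, dpath a x y p2 & dpath a y x p3],
        [/\ k1 <= size p1, k2 <= size p2 & k3 <= size p3] &
        [/\ [disjoint internal p1 & internal p2],
            [disjoint internal p1 & internal p3] &
            [disjoint internal p2 & internal p3]]].

(* Main.v *)
Require Import Defs.
From mathcomp Require Import all_boot.
Set Implicit Arguments. Unset Strict Implicit. Unset Printing Implicit Defensive.

Section B.
Variables (V : finType) (a : rel V).
Hypothesis nB : ~ has_B_subdivision a 2 1 1.

Lemma internal_rcons (q : seq V) y : internal (rcons q y) = q.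
Proof. by rewrite /internal size_rcons /= -cats1 take_size_cat. Qed.

Lemma mkB x y q1 q2 q3 :
  x != y -> path a x (rcons q1 y) -> path a x (rcons q2 y) -> path a y (rcons q3 x) ->
  uniq q1 -> uniq q2 -> uniq q3 ->
  x \notin q1 -> y \notin q1 -> x \notin q2 -> y \notin q2 -> x \notin q3 -> y \notin q3 ->
  q1 != [::] ->
  (forall t, t \in q1 -> t \in q2 -> False) -> (forall t, t \in q1 -> t \in q3 -> False) ->
  (forall t, t \in q2 -> t \in q3 -> False) -> False.
Proof.
move=> xy p1 p2 p3 u1 u2 u3 x1 y1 x2 y2 x3 y3 n1 d12 d13 d23.
apply: nB; exists x, y, (rcons q1 y), (rcons q2 y), (rcons q3 x).
have yx : y != x by rewrite eq_sym.
split => //.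
- split; split; rewrite ?last_rcons //= ?mem_rcons ?inE ?rcons_uniq ?negb_or;
  by apply/and3P; split => //; apply/andP.
- by rewrite !size_rcons; split => //; case: (q1) n1.
- rewrite !internal_rcons !disjoint_has; split; apply/hasP => -[t H1 H2]; eauto.
Qed.

Lemma first_hit (e : rel V) (B : pred V) x p : path e x p -> x \notin B -> has B p ->
  exists q z p2, [/\ p = q ++ z :: p2, path e x (rcons q z), z \in B &
                     forall t, t \in q -> t \notin B].
Proof.
elim: p x => [|y p IH] x //= /andP[exy py] xB /orP[yB|hp].
  by exists [::], y, p; split => //=; rewrite exy.
have [yB|yB] := boolP (y \in B); first by exists [::], y, p; split => //=; rewrite exy.
have [q [z [p2 [-> pq zB qB]]]] := IH y py yB hp.
exists (y :: q), z, p2; split => //=; first by rewrite exy.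
by move=> t; rewrite inE => /orP[/eqP->|/qB].
Qed.

Lemma last_hit (e : rel V) (B : pred V) x p : path e x p -> has B (x :: p) ->
  exists p1 z q, [/\ x :: p = p1 ++ z :: q, path e z q, z \in B &
                     forall t, t \in q -> t \notin B].
Proof.
elim: p x => [|y p IH] x /=.
  by rewrite orbF => _ xB; exists [::], x, [::].
move=> /andP[exy py] /orP[xB|hp]; last first.
  have [p1 [z [q [E pq zB qB]]]] := IH y py hp.
  by exists (x :: p1), z, q; rewrite E.
have [hp|hp] := boolP (has B (y :: p)).
  have [p1 [z [q [E pq zB qB]]]] := IH y py hp.
  by exists (x :: p1), z, q; rewrite E.
exists [::], x, (y :: p); split => //=; first by rewrite exy.
by move=> t tp; apply/negP => tB; move/hasP: hp; apply; exists t.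
Qed.

Lemma connect_upath (e : rel V) x y : connect e x y ->
  exists p, [/\ path e x p, uniq (x :: p) & last x p = y].
Proof.
move/connectP=> [p pp ->]; case: (shortenP pp) => p' pp' up' _.
by exists p'.
Qed.

Definition aR (Y : {set V}) : rel V := [rel x y | [&& a x y, x \in Y & y \in Y]].
Definition strongX (Y : {set V}) := forall x y, x \in Y -> y \in Y -> connect (aR Y) x y.

Lemma aR_path (Y : {set V}) x p : path (aR Y) x p -> path a x p /\ {subset p <= Y}.
Proof.
elim: p x => [|y p IH] x //= /andP[/and3P[exy xY yY] /IH [pp sp]].
split; first by rewrite exy.
by move=> t; rewrite inE => /orP[/eqP->|/sp].
Qed.

Lemma path_aR (Y : {set V}) x p : x \in Y -> {subset p <= Y} -> path a x p -> path (aR Y) x p.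
Proof.
move=> xY sp; apply: (@sub_in_path _ (mem Y)).
  by move=> u v uY vY auv; rewrite /aR /= auv uY vY.
by apply/andP; split; [exact: xY | apply/allP].
Qed.

Lemma heart (X : {set V}) u w s : strongX X -> u \in X -> w \in X -> u != w ->
  s != [::] -> uniq s -> (forall t, t \in s -> t \notin X) -> path a u (rcons s w) -> False.
Proof.
move=> sX uX wX uw sn us sX' ps.
have [r [pr ur lr]] := connect_upath (sX w u wX uX).
have [pr' rX] := aR_path pr.
have [q [pq uq lq]] := connect_upath (sX u w uX wX).
have ur_in : u \in r.
  have := mem_last w r; rewrite lr inE (negbTE uw) /=; done.
have [p1 [z [q' [E pq' zr q'r]]]] := @last_hit _ (fun t => t \in r) _ _ pq (introT hasP (ex_intro2 _ _ u (mem_head u q) ur_in)).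
have lq' : last z q' = w by rewrite -lq -(last_cons u u q) E last_cat last_cons.
have wr : w \notin r by move: ur => /= /andP[].
have zw : z != w by apply: contraNneq wr => <-.
have uq' : uniq (z :: q') by move: uq; rewrite E cat_uniq => /and3P[].
move: E pq' lq' uq' q'r; case/lastP: q' => [|q'' w'] /=; first by move=> _ _ E'; rewrite E' eqxx in zw.
rewrite last_rcons => E pq' Ew; subst w' => uq' q'r.
have [pq'' q''X] := aR_path pq'.
move: q'r pr ur lr pr' rX wr ur_in; case/splitPr: zr => r1 r2.
move=> q'r pr ur lr pr' rX wr ur_in.
rewrite last_cat /= in lr.
move: pr'; rewrite cat_path /= => /and3P[pr1 azr pr2].
move: ur; rewrite /= cat_uniq /= mem_cat inE !negb_or => /and5P[/and3P[wr1 wz wr2] ur1 /andP[zr1 /hasPn r12] zr2 ur2].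
have r2X : {subset r2 <= X} by move=> t tr; apply: rX; rewrite mem_cat inE tr !orbT.
have r1X : {subset r1 <= X} by move=> t tr; apply: rX; rewrite mem_cat tr.
move: uq'; rewrite /= rcons_uniq mem_rcons inE negb_or => /andP[/andP[zw' zq''] /andP[wq'' uq'']].
apply: (@mkB z w (r2 ++ s) q'' r1).
- exact: zw.
- by rewrite rcons_cat cat_path pr2 lr ps.
- exact: pq''.
- by rewrite rcons_path pr1.
- rewrite cat_uniq ur2 us andbT; apply/hasPn => t ts; apply/negP => tr2.
  by move: (sX' t ts); rewrite r2X.
- exact: uq''.
- exact: ur1.
- by rewrite mem_cat negb_or zr2; apply/negP => /sX'; rewrite (rX z) // mem_cat inE eqxx orbT.
- by rewrite mem_cat negb_or wr2; apply/negP => /sX'; rewrite wX.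
- exact: zq''.
- exact: wq''.
- exact: zr1.
- exact: wr1.
- by case: (r2) sn => //; case: (s).
- move=> t; rewrite mem_cat => /orP[tr2|ts] tq''.
    by move: (q'r t); rewrite mem_rcons inE tq'' orbT mem_cat inE tr2 !orbT => /(_ isT).
  by move: (sX' t ts); rewrite q''X // mem_rcons inE tq'' orbT.
- move=> t; rewrite mem_cat => /orP[tr2|ts] tr1.
    by move: (r12 t tr2); rewrite tr1.
  by move: (sX' t ts); rewrite r1X.
- move=> t tq'' tr1.
  by move: (q'r t); rewrite mem_rcons inE tq'' orbT mem_cat tr1 => /(_ isT).
Qed.

Lemma cyc_adj (irr : irreflexive a) u c y z : uniq (u :: c) -> path a u (rcons c u) ->
  y \in c -> z \in c -> a y z -> index z c = (index y c).+1.
Proof.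
move=> uc pc yc zc ayz.
have zy : z != y by apply: contraTneq ayz => ->; rewrite irr.
move: uc pc zc; case/splitPr: yc => c1 c2.
rewrite /= mem_cat inE !negb_or cat_uniq /= negb_or => /andP[/and3P[uc1 uy uc2] /and4P[uq1 /andP[yc1 /hasPn c12] yc2 uq2]].
rewrite rcons_cat cat_path /= => /and3P[pc1 ac1y pc2].
rewrite mem_cat inE (negbTE zy) /= => /orP[zc1|zc2].
  exfalso; move: pc1 ac1y uc1 uq1 yc1 c12; case/splitPr: zc1 => d1 d2.
  rewrite cat_path /= last_cat /= => /and3P[pd1 ad1z pd2] azy.
  rewrite mem_cat inE !negb_or cat_uniq /= negb_or => /and3P[ud1 uz ud2] /and3P[ud1' /andP[zd1 /hasPn d12] /andP[zd2 ud2']].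
  rewrite mem_cat inE !negb_or => /and3P[yd1 yz yd2] c12.
  apply: (@mkB y z (c2 ++ u :: d1) [::] d2).
  - by rewrite eq_sym.
  - move: pc2; rewrite rcons_path => /andP[pc2 acu].
    by rewrite rcons_cat cat_path pc2 /= acu rcons_path pd1 ad1z.
  - by rewrite /= ayz.
  - by rewrite rcons_path pd2 azy.
  - rewrite cat_uniq uq2 /= negb_or uc2 ud1 ud1' andbT /=.
    by rewrite andbT; apply/hasPn => t td1; apply/negP => /c12; rewrite mem_cat td1.
  - done.
  - exact: ud2'.
  - by rewrite mem_cat inE negb_or yc2 /= negb_or eq_sym uy yd1.
  - rewrite mem_cat inE !negb_or zd1 (eq_sym z) uz ?andbT /=.
    by apply/negP => /c12; rewrite mem_cat inE eqxx orbT.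
  - done.
  - done.
  - exact: yd2.
  - exact: zd2.
  - by case: (c2).
  - done.
  - move=> t; rewrite mem_cat inE => /orP[tc2|/orP[/eqP->|td1]] td2.
    + by move: (c12 t tc2); rewrite mem_cat inE td2 !orbT.
    + by move: ud2; rewrite td2.
    + by move: (d12 t td2); rewrite td1.
  - done.
move: pc2 uc2 yc2 uq2 c12; case/splitPr: zc2 => d1 d2.
rewrite rcons_cat cat_path /= => /and3P[pd1 ad1z pd2].
rewrite mem_cat inE !negb_or cat_uniq /= => /and3P[ud1 uz ud2].
rewrite ?mem_cat ?inE ?negb_or => /and3P[yd1 yz yd2] /and3P[ud1' /andP[zd1 /hasPn d12] /andP[zd2 ud2']] c12.
case: d1 pd1 ad1z ud1 yd1 ud1' zd1 d12 c12 => [|t1 d1] pd1 ad1z ud1 yd1 ud1' zd1 d12 c12.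
  rewrite !index_cat (negbTE yc1) /= eqxx (negbTE yz) /=.
  have -> : (z \in c1) = false.
    by apply/negbTE/c12; rewrite ?mem_cat inE eqxx ?orbT.
  by rewrite eqxx addn0 addn1.
exfalso; apply: (@mkB y z (t1 :: d1) [::] (d2 ++ u :: c1)).
- by rewrite eq_sym.
- by rewrite rcons_path pd1 ad1z.
- by rewrite /= ayz.
- by move: pd2; rewrite rcons_cat cat_path rcons_path /= rcons_path pc1 ac1y => /andP[-> ->].
- exact: ud1'.
- done.
- rewrite cat_uniq ud2' /= uc1 uq1 andbT /= negb_or ud2 /=.
  rewrite andbT; apply/hasPn => t tc1; apply/negP => td2; move: (c12 t); rewrite mem_cat inE /= inE td2 !orbT tc1; by move=> /(_ isT).
- exact: yd1.
- exact: zd1.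
- done.
- done.
- by rewrite mem_cat inE !negb_or yd2 eq_sym uy yc1.
- rewrite mem_cat inE !negb_or zd2 eq_sym uz /=.
  by apply/negP => zc1; move: (c12 z); rewrite mem_cat inE /= inE eqxx !orbT zc1; move=> /(_ isT).
- done.
- done.
- move=> t td1; rewrite mem_cat inE => /orP[td2|/orP[/eqP Et|tc1]].
  + by move: (d12 t td2); rewrite td1.
  + by move: ud1; rewrite -Et td1.
  + by move: (c12 t); rewrite mem_cat td1 tc1 => /(_ isT).
- done.
Qed.

Definition proper_on (Y : {set V}) (f : V -> 'I_3) :=
  forall x y, x \in Y -> y \in Y -> und_adj a x y -> f x != f y.

Definition other (j : 'I_3) (b : bool) : 'I_3 := inord ((j + 1 + b) %% 3).

Lemma other_neq j b : other j b != j.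
Proof. by case: j => [[|[|[|?]]] ?]; case: b => //; rewrite /other -val_eqE /= inordK. Qed.

Lemma other_bool j : other j true != other j false.
Proof. by case: j => [[|[|[|?]]] ?] //; rewrite /other -val_eqE /= !inordK. Qed.

Lemma close_ear (irr : irreflexive a) (X : {set V}) f u v c :
  strongX X -> proper_on X f -> u \in X -> v \in c -> uniq (u :: c) ->
  path a u (rcons c u) -> (forall t, t \in c -> t \notin X) ->
  exists (X' : {set V}) f', [/\ X \proper X', strongX X' & proper_on X' f'].
Proof.
move=> sX pf uX vc uc pc cX.
set X' := X :|: [set t | t \in c].
have inX' t : (t \in X') = (t \in X) || (t \in c) by rewrite !inE.
exists X', (fun t => if t \in X then f t else other (f u) (odd (index t c))).
have allX' : {subset rcons c u <= X'}.
  by move=> t; rewrite mem_rcons inE inX' => /orP[/eqP->|->]; rewrite ?uX ?orbT.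
have pc' : path (aR X') u (rcons c u) by apply: path_aR => //; rewrite inX' uX.
have sub : subrel (aR X) (aR X').
  by move=> x y /and3P[axy xX yX]; rewrite /aR /= axy !inX' xX yX.
have toU t : t \in X' -> connect (aR X') t u.
  rewrite inX' => /orP[tX|tc]; first by apply: (connect_sub (fun x y h => connect1 (sub x y h))); apply: sX.
  move: pc pc' allX'; case/splitPr: tc => c1 c2.
  rewrite rcons_cat cat_path /= => /and3P[_ _ pt] _ allX'.
  have pt' : path (aR X') t (rcons c2 u).
    apply: path_aR => //; first by apply: allX'; rewrite mem_cat inE eqxx orbT.
    by move=> z zc; apply: allX'; rewrite mem_cat inE zc !orbT.
  by have := path_connect pt' (mem_last t (rcons c2 u)); rewrite last_rcons.
have fromU t : t \in X' -> connect (aR X') u t.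
  rewrite inX' => /orP[tX|tc]; first by apply: (connect_sub (fun x y h => connect1 (sub x y h))); apply: sX.
  by apply: (path_connect pc'); rewrite inE mem_rcons inE tc !orbT.
split.
- apply/properP; split; first exact: subsetUl.
  by exists v; [rewrite inX' vc orbT | exact: cX].
- by move=> x y xX yX; apply: connect_trans (toU x xX) (fromU y yX).
suff H : forall x y, x \in X' -> y \in X' -> a x y ->
   (if x \in X then f x else other (f u) (odd (index x c))) !=
   (if y \in X then f y else other (f u) (odd (index y c))).
  by move=> x y xX yX /orP[axy|ayx]; [exact: H | rewrite eq_sym; exact: H].
move=> x y; rewrite !inX' => /orP[xX|xc] /orP[yX|yc] axy.
- by rewrite xX yX; apply: pf => //; rewrite /und_adj axy.
- rewrite xX (negbTE (cX y yc)).
  have [xu|xu] := eqVneq x u; first by subst; rewrite eq_sym other_neq.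
  exfalso; move: pc uc cX; case/splitPr: yc => c1 c2 pc uc cX.
  apply: (@heart X x u (y :: c2) sX xX uX xu) => //.
  + by move: uc; rewrite /= cat_uniq => /and4P[_ _ _ H]; exact: H.
  + by move=> t tc; apply: cX; rewrite mem_cat tc orbT.
  + by move: pc; rewrite rcons_cat cat_path /= axy => /and3P[_ _ ->].
- rewrite yX (negbTE (cX x xc)).
  have [yu|yu] := eqVneq y u; first by subst; rewrite other_neq.
  exfalso; move: pc uc cX; case/splitPr: xc => c1 c2 pc uc cX.
  have uy : u != y by rewrite eq_sym.
  apply: (@heart X u y (rcons c1 x) sX uX yX uy).
  + by case: (c1).
  + by move: uc; rewrite /= cat_uniq rcons_uniq /= => /and5P[_ -> /norP[-> _] _ _].
  + by move=> t; rewrite mem_rcons => tc; apply: cX; rewrite mem_cat inE; move: tc; rewrite inE => /orP[->|->]; rewrite ?orbT.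
  + by move: pc; rewrite rcons_cat cat_path /= !rcons_path last_rcons axy andbT => /and4P[-> -> _ _].
- rewrite (negbTE (cX x xc)) (negbTE (cX y yc)) (cyc_adj irr uc pc xc yc axy) /=.
  by case: (odd (index x c)) => /=; [|rewrite eq_sym]; exact: other_bool.
Qed.

Lemma ear_step (irr : irreflexive a) (sc : strongly_connected a) (X : {set V}) f x0 :
  strongX X -> proper_on X f -> x0 \in X -> X != setT ->
  exists (X' : {set V}) f', [/\ X \proper X', strongX X' & proper_on X' f'].
Proof.
move=> sX pf x0X XT.
have [y0 y0X] : exists y, y \notin X.
  case: (pickP [pred y | y \notin X]) => [y /= yX|H]; first by exists y.
  by move: XT; rewrite eqEsubset subsetT /= => /subsetPn[y _]; rewrite (negbFE (H y)).
have [p [pp up lp]] := connect_upath (sc x0 y0).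
have hp : has [pred t | t \notin X] p.
  apply/hasP; exists y0 => //; have := mem_last x0 p; rewrite lp inE => /orP[/eqP E|//].
  by move: y0X; rewrite E x0X.
have nx0 : x0 \notin [pred t | t \notin X] by rewrite inE /= negbK.
have [q [v [p2 [_ pqv vX qX]]]] := first_hit pp nx0 hp.
set u := last x0 q.
have uX : u \in X.
  have := mem_last x0 q; rewrite -/u inE => /orP[/eqP->//|uq].
  by have := qX u uq; rewrite /= negbK.
move: pqv; rewrite rcons_path -/u => /andP[_ auv].
have [p' [pp' up' lp']] := connect_upath (sc v u).
have hp' : has (fun t => t \in X) p'.
  apply/hasP; exists u => //; have := mem_last v p'; rewrite lp' inE => /orP[/eqP E|//].
  by move: vX; rewrite -E inE /= uX.
have [s [w [p3 [Ep' psw wX sX']]]] := @first_hit a (fun t => t \in X) v p' pp' vX hp'.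
have uvs : uniq (v :: s).
  by move: up'; rewrite Ep' /= mem_cat negb_or cat_uniq => /andP[/andP[-> _] /andP[-> _]].
have vsX : forall t, t \in v :: s -> t \notin X.
  by move=> t; rewrite inE => /orP[/eqP->|/sX'] //.
have [wu|wu] := eqVneq w u; last first.
  exfalso; apply: (@heart X u w (v :: s) sX uX wX _ _ uvs vsX); [by rewrite eq_sym | done | by rewrite /= auv].
subst w.
apply: (@close_ear irr X f u v (v :: s) sX pf uX (mem_head v s)) => //.
- rewrite /= in uvs *; rewrite uvs andbT; apply/negP => /vsX; rewrite uX //.
- by rewrite /= auv psw.
Qed.

Lemma grow (irr : irreflexive a) (sc : strongly_connected a) n :
  forall (X : {set V}) f x0, #|~: X| <= n -> strongX X -> proper_on X f -> x0 \in X ->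
  exists g, proper_on setT g.
Proof.
elim: n => [|n IH] X f x0 cX sX pf x0X.
  have XT : X = setT.
    by apply/setP => t; rewrite inE; move: cX; rewrite leqn0 cards_eq0 => /eqP/setP/(_ t); rewrite !inE => /negbFE.
  by rewrite -XT; exists f.
have [XT|XT] := eqVneq X setT; first by subst; exists f.
have [X' [f' [PX sX' pf']]] := ear_step irr sc sX pf x0X XT.
apply: (IH X' f' x0) => //.
  by rewrite -ltnS; apply: leq_trans cX; apply: proper_card; rewrite properC.
by move: PX => /properP[/subsetP /(_ x0 x0X)].
Qed.

Lemma col3 (irr : irreflexive a) (sc : strongly_connected a) : colorable a 3.
Proof.
case: (pickP (fun _ : V => true)) => [r _|H]; last first.
  by exists (fun _ => ord0) => x; move: (H x).
have [g pg] : exists g, proper_on setT g.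
  apply: (@grow irr sc #|~: [set r]| [set r] (fun _ => ord0) r) => //; last by rewrite inE.
  - by move=> x y; rewrite !inE => /eqP-> /eqP->; apply: connect0.
  - by move=> x y; rewrite !inE => /eqP-> /eqP->; rewrite /und_adj irr.
by exists g => x y; apply: pg; rewrite inE.
Qed.
End B.

From Stdlib Require Import Classical.

Theorem mainTheorem2 (V : finType) (a : rel V) (irr : irreflexive a) :
  strongly_connected a -> 4 <= chi irr -> has_B_subdivision a 2 1 1.
Proof.
move=> sc h4; apply: NNPP => nB.
have c3 := col3 nB irr sc.
move: h4; rewrite /chi; case: ex_minnP => m _ Hm.
move=> lt3m; have := Hm 3 (introT (colorableP a 3) c3); by rewrite leqNgt lt3m.
Qed.
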